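(* Let $G=(V_G,E_G)$ be a finite graph whose automorphism group acts vertex-transitively on $V_G$. Then the worst case of the graph semi-definite program for $H$ equals $-\sqrt{W}$, where $W$ is the worst case of the graph semi-definite program for $H^2$; moreover $W=\vartheta(G)$, and both worst cases are attained at $\vec J=|V_G|^{-1/2}(1,1,\ldots,1)$.
   Context: Let $G=(V_G,E_G)$ be a finite graph; rows and columns of the matrices below are indexed by $V_G$. For a real vector $\vec J=(J_\alpha)_{\alpha\in V_G}$: - The ''graph semi-definite program for $H^2$'' is: maximize $\sum_{\alpha,\beta}M_{\alpha,\beta}J_\alpha J_\beta$ over real symmetric positive semi-definite matrices $M$ with $M_{\alpha,\alpha}=1$ for all $\alpha$ and $M_{\alpha,\beta}=0$ whenever $(\alpha,\beta)\in E_G$. - The ''graph semi-definite program for $H$'' is: minimize $(\vec J,v)=\sum_\alpha J_\alpha v_\alpha$ over real vectors $v$ and matrices $M$ satisfying the constraints above, such that the block matrix $N=\begin{pmatrix}1 & v^T\\ v & M\end{pmatrix}$ is positive semi-definite. - The worst case of the program for $H^2$ is the maximum of its optimum over all $\vec J$ with $\sum_\alpha J_\alpha^2=1$. The worst case of the program for $H$ is the minimum of its optimum over all $\vec J$ with $\sum_\alpha J_\alpha^2=1$. $\vartheta(G)$ denotes the Lovász theta function: the maximum of the sum of all entries of a real symmetric positive semi-definite matrix $B$ with $\mathrm{tr}\,B=1$ and $B_{\alpha,\beta}=0$ whenever $(\alpha,\beta)\in E_G$. *)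

(* Defs.v *)
From HB Require Import structures.
From mathcomp Require Import all_boot all_order all_algebra all_fingroup.
From mathcomp Require Import reals.
Set Implicit Arguments. Unset Strict Implicit. Unset Printing Implicit Defensive.
Import Order.TTheory GRing.Theory Num.Theory.
Local Open Scope ring_scope.

Section GraphSDP.
Variable R : realType.

Definition is_greatest (S : R -> Prop) (w : R) := S w /\ forall x, S x -> x <= w.
Definition is_least (S : R -> Prop) (w : R) := S w /\ forall x, S x -> w <= x.

Definition psd (m : nat) (A : 'M[R]_m) :=
  A^T = A /\ forall x : 'cV[R]_m, 0 <= (x^T *m A *m x) 0 0.

Variable n : nat.
Variable e : rel 'I_n.

Definition simple_graph := symmetric e /\ irreflexive e.

Definition vertex_transitive :=
  forall x y : 'I_n, exists s : {perm 'I_n},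
    (forall a b, e (s a) (s b) = e a b) /\ s x = y.

Definition unit_vec (J : 'cV[R]_n) := \sum_a J a 0 ^+ 2 = 1.

Definition J_uniform : 'cV[R]_n := \col_(a < n) (Num.sqrt (n%:R))^-1.

Definition feasibleM (M : 'M[R]_n) :=
  psd M /\ (forall a, M a a = 1) /\ (forall a b, e a b -> M a b = 0).

Definition H2_values (J : 'cV[R]_n) : R -> Prop :=
  fun w => exists M, feasibleM M /\ w = \sum_a \sum_b M a b * J a 0 * J b 0.
Definition H2_opt (J : 'cV[R]_n) (w : R) := is_greatest (H2_values J) w.
Definition H2_worst (W : R) :=
  is_greatest (fun w => exists J, unit_vec J /\ H2_opt J w) W.

Definition Nmat (v : 'cV[R]_n) (M : 'M[R]_n) : 'M[R]_(1 + n) :=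
  block_mx 1%:M v^T v M.
Definition H_values (J : 'cV[R]_n) : R -> Prop :=
  fun w => exists v M, feasibleM M /\ psd (Nmat v M) /\
                       w = \sum_a J a 0 * v a 0.
Definition H_opt (J : 'cV[R]_n) (w : R) := is_least (H_values J) w.
Definition H_worst (W : R) :=
  is_least (fun w => exists J, unit_vec J /\ H_opt J w) W.

Definition theta_values : R -> Prop :=
  fun t => exists B : 'M[R]_n, psd B /\ \tr B = 1 /\
             (forall a b, e a b -> B a b = 0) /\ t = \sum_a \sum_b B a b.
Definition is_theta (t : R) := is_greatest theta_values t.

End GraphSDP.

(* Main.v *)
Require Import Defs.
From HB Require Import structures.
From mathcomp Require Import all_boot all_order all_algebra all_fingroup.
From mathcomp Require Import reals.
From mathcomp Require Import ring lra.
Set Implicit Arguments. Unset Strict Implicit. Unset Printing Implicit Defensive.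
Import Order.TTheory GRing.Theory Num.Theory.
Local Open Scope ring_scope.

Section Alg.
Variable R : realType.

Definition bf m (M : 'M[R]_m) (x y : 'cV[R]_m) : R := (x^T *m M *m y) 0 0.

Lemma bfE m (M : 'M[R]_m) x y :
  bf M x y = \sum_a \sum_b x a 0 * M a b * y b 0.
Proof.
rewrite /bf mxE (eq_bigr (fun b => \sum_a x a 0 * M a b * y b 0)).
  by rewrite exchange_big.
by move=> b _; rewrite mxE mulr_suml; apply: eq_bigr => a _; rewrite mxE.
Qed.

Lemma bfDl m (M : 'M[R]_m) x y z : bf M (x + y) z = bf M x z + bf M y z.
Proof.
rewrite !bfE -big_split; apply: eq_bigr => a _; rewrite -big_split.
by apply: eq_bigr => b _; rewrite !mxE /=; ring.
Qed.
Lemma bfDr m (M : 'M[R]_m) x y z : bf M z (x + y) = bf M z x + bf M z y.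
Proof.
rewrite !bfE -big_split; apply: eq_bigr => a _; rewrite -big_split.
by apply: eq_bigr => b _; rewrite !mxE /=; ring.
Qed.
Lemma bfZl m (M : 'M[R]_m) c x z : bf M (c *: x) z = c * bf M x z.
Proof.
rewrite !bfE mulr_sumr; apply: eq_bigr => a _; rewrite mulr_sumr.
by apply: eq_bigr => b _; rewrite !mxE /=; ring.
Qed.
Lemma bfZr m (M : 'M[R]_m) c x z : bf M z (c *: x) = c * bf M z x.
Proof.
rewrite !bfE mulr_sumr; apply: eq_bigr => a _; rewrite mulr_sumr.
by apply: eq_bigr => b _; rewrite !mxE /=; ring.
Qed.
Lemma bfC m (M : 'M[R]_m) x y : M^T = M -> bf M x y = bf M y x.
Proof.
move=> sM; rewrite !bfE exchange_big; apply: eq_bigr => a _.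
apply: eq_bigr => b _; have := congr1 (fun A : 'M[R]_m => A b a) sM; rewrite mxE => ->.
ring.
Qed.

Lemma psd_bf m (M : 'M[R]_m) : psd M -> forall x, 0 <= bf M x x.
Proof. by case. Qed.

Lemma bfCS m (M : 'M[R]_m) x y : psd M -> 0 < bf M x x ->
  bf M x y ^+ 2 <= bf M x x * bf M y y.
Proof.
move=> pM qpos; have [sM _] := pM.
set q := bf M x x; set a := bf M x y; set Q := bf M y y.
have := psd_bf pM (y + (- (a / q)) *: x).
rewrite bfDl !bfDr !bfZl !bfZr (bfC y x sM) -/q -/a -/Q => h.
have h2 : 0 <= Q - a ^+ 2 / q.
  have -> : Q - a ^+ 2 / q = Q + - (a / q) * a + (- (a / q) * a + - (a / q) * (- (a / q) * q)).
    by field; rewrite gt_eqF.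
  exact: h.
rewrite -subr_ge0; have -> : q * Q - a ^+ 2 = q * (Q - a ^+ 2 / q).
  by field; rewrite gt_eqF.
by rewrite mulr_ge0 // ltW.
Qed.

End Alg.
Section Graph.
Variable R : realType.
Variable n : nat.
Variable e : rel 'I_n.

Lemma NmatE (v : 'cV[R]_n) (M : 'M[R]_n) (x : 'cV[R]_(1 + n)) :
  bf (Nmat v M) x x =
  x (lshift n ord0) 0 ^+ 2
  + 2 * x (lshift n ord0) 0 * (\sum_j v j 0 * x (rshift 1 j) 0)
  + bf M (\col_j x (rshift 1 j) 0) (\col_j x (rshift 1 j) 0).
Proof.
rewrite bfE big_split_ord /= big_ord1 big_split_ord /= big_ord1.
rewrite /Nmat block_mxEul.
under [X in _ + X + _ = _]eq_bigr do rewrite block_mxEur.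
under [X in _ + X = _]eq_bigr do rewrite big_split_ord /= big_ord1 block_mxEdl.
under [X in _ + X = _]eq_bigr do under eq_bigr do rewrite block_mxEdr.
rewrite big_split /= bfE.
set t := x (lshift n ord0) 0.
have -> : \sum_i x (rshift 1 i) 0 * v i 0 * t = t * \sum_j v j 0 * x (rshift 1 j) 0.
  rewrite mulr_sumr; apply: eq_bigr => i _; ring.
have -> : \sum_i t * (v^T) 0 i * x (rshift 1 i) 0 = t * \sum_j v j 0 * x (rshift 1 j) 0.
  rewrite mulr_sumr; apply: eq_bigr => i _; rewrite mxE; ring.
have -> : \sum_a \sum_b (\col_j x (rshift 1 j) 0) a 0 * M a b * (\col_j x (rshift 1 j) 0) b 0
   = \sum_a \sum_b x (rshift 1 a) 0 * M a b * x (rshift 1 b) 0.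
  by apply: eq_bigr => a _; apply: eq_bigr => b _; rewrite !mxE.
rewrite !mxE eqxx /=; ring.
Qed.

Lemma Nmat_col (v : 'cV[R]_n) (M : 'M[R]_n) t (y : 'cV[R]_n) :
  bf (Nmat v M) (col_mx (t%:M : 'M_1) y) (col_mx (t%:M : 'M_1) y) =
  t ^+ 2 + 2 * t * (\sum_j v j 0 * y j 0) + bf M y y.
Proof.
rewrite NmatE col_mxEu mxE eqxx mulr1n.
have -> : \col_j col_mx (t%:M : 'M_1) y (rshift 1 j) 0 = y.
  by apply/matrixP => i j; rewrite mxE col_mxEd (ord1 j).
by under eq_bigr do rewrite col_mxEd.
Qed.

Lemma objE (M : 'M[R]_n) (J : 'cV[R]_n) :
  \sum_a \sum_b M a b * J a 0 * J b 0 = bf M J J.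
Proof. by rewrite bfE; apply: eq_bigr => a _; apply: eq_bigr => b _; ring. Qed.

Lemma lb_H (v : 'cV[R]_n) (M : 'M[R]_n) (J : 'cV[R]_n) :
  psd (Nmat v M) -> (\sum_a J a 0 * v a 0) ^+ 2 <= bf M J J.
Proof.
move=> pN; set s := \sum_a J a 0 * v a 0.
have := psd_bf pN (col_mx ((- s)%:M : 'M_1) J).
rewrite Nmat_col.
have -> : \sum_j v j 0 * J j 0 = s by apply: eq_bigr => j _; rewrite mulrC.
move=> h; rewrite -subr_ge0.
by have -> : bf M J J - s ^+ 2 = (- s) ^+ 2 + 2 * - s * s + bf M J J by ring.
Qed.

Lemma theta_of (M : 'M[R]_n) (J : 'cV[R]_n) :
  unit_vec J -> feasibleM e M -> theta_values e (bf M J J).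
Proof.
move=> uJ [[sM pM] [dM eM]].
exists (\matrix_(a, b) (J a 0 * M a b * J b 0)); split; last split; last split.
- split.
    apply/matrixP => a b; rewrite !mxE.
    have := congr1 (fun A : 'M[R]_n => A a b) sM; rewrite mxE => ->; ring.
  move=> x.
  have := pM (\col_a (J a 0 * x a 0)); rewrite -/(bf _ _ _) -/(bf _ _ _) !bfE.
  suff -> : \sum_a \sum_b (\col_a (J a 0 * x a 0)) a 0 * M a b * (\col_a (J a 0 * x a 0)) b 0
    = \sum_a \sum_b x a 0 * (\matrix_(a, b) (J a 0 * M a b * J b 0)) a b * x b 0 by [].
  by apply: eq_bigr => a _; apply: eq_bigr => b _; rewrite !mxE; ring.
- rewrite /mxtrace -uJ; apply: eq_bigr => a _; rewrite mxE dM; ring.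
- by move=> a b /eM eab; rewrite mxE eab; ring.
- rewrite bfE; apply: eq_bigr => a _; apply: eq_bigr => b _; rewrite mxE; ring.
Qed.

Lemma bf_mul (M : 'M[R]_n) (J y : 'cV[R]_n) :
  \sum_j (M *m J) j 0 * y j 0 = bf M y J.
Proof.
rewrite bfE; apply: eq_bigr => j _; rewrite mxE mulr_suml.
by apply: eq_bigr => b _; ring.
Qed.

Lemma attain_H (M : 'M[R]_n) (J : 'cV[R]_n) : psd M -> 0 < bf M J J ->
  let v := (- (Num.sqrt (bf M J J))^-1) *: (M *m J) in
  psd (Nmat v M) /\ \sum_a J a 0 * v a 0 = - Num.sqrt (bf M J J).
Proof.
move=> pM qpos v; have [sM _] := pM.
set q := bf M J J; set r := Num.sqrt q.
have rpos : 0 < r by rewrite sqrtr_gt0.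
have rq : r ^+ 2 = q by rewrite sqr_sqrtr // ltW.
split.
  split.
    by rewrite /Nmat tr_block_mx trmxK trmx1 sM.
  move=> x; rewrite -/(bf _ _ _) NmatE.
  set t := x (lshift n ord0) 0; set y := \col_j x (rshift 1 j) 0.
  have -> : \sum_j v j 0 * x (rshift 1 j) 0 = - r^-1 * bf M y J.
    rewrite -bf_mul mulr_sumr; apply: eq_bigr => j _; rewrite /v /y !mxE; ring.
  rewrite (bfC y J sM).
  have cs := @bfCS _ _ M J y pM qpos; rewrite -/q -rq in cs.
  set a := bf M J y in cs *; set Q := bf M y y in cs *.
  have h1 : (a / r) ^+ 2 <= Q.
    by rewrite expr_div_n ler_pdivrMr ?exprn_gt0 // mulrC.
  have -> : t ^+ 2 + 2 * t * (- r^-1 * a) + Q = (t - a / r) ^+ 2 + (Q - (a / r) ^+ 2).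
    by field; rewrite gt_eqF.
  by rewrite addr_ge0 ?sqr_ge0 // subr_ge0.
have -> : \sum_a J a 0 * v a 0 = - r^-1 * q.
  rewrite /q -(bf_mul M J J) mulr_sumr; apply: eq_bigr => j _.
  by rewrite /v mxE; ring.
by rewrite -rq; field; rewrite gt_eqF.
Qed.

Definition Aut : {set {perm 'I_n}} :=
  [set s : {perm 'I_n} | [forall a, forall b, e (s a) (s b) == e a b]].

Lemma AutP (s : {perm 'I_n}) : reflect (forall a b, e (s a) (s b) = e a b) (s \in Aut).
Proof.
rewrite inE; apply: (iffP forallP) => [h a b | h a].
  exact/eqP/(forallP (h a)).
by apply/forallP => b; apply/eqP/h.
Qed.

Lemma Aut1 : (1%g : {perm 'I_n}) \in Aut.
Proof. by apply/AutP => a b; rewrite !perm1. Qed.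

Lemma AutM (s t : {perm 'I_n}) : s \in Aut -> t \in Aut -> (s * t)%g \in Aut.
Proof.
by move=> /AutP hs /AutP ht; apply/AutP => a b; rewrite !permM ht hs.
Qed.

Lemma AutV (t : {perm 'I_n}) : t \in Aut -> (t^-1)%g \in Aut.
Proof.
move=> /AutP ht; apply/AutP => a b.
by rewrite -[in RHS](permKV t a) -[in RHS](permKV t b) ht.
Qed.

Lemma card_Aut_gt0 : (0 < #|Aut|)%N.
Proof. by apply/card_gt0P; exists 1%g; exact: Aut1. Qed.

Definition symB (B : 'M[R]_n) : 'M[R]_n :=
  \matrix_(a, b) ((#|Aut|%:R)^-1 * \sum_(s in Aut) B (s a) (s b)).

Lemma bf_perm (B : 'M[R]_n) (x : 'cV[R]_n) (s : {perm 'I_n}) :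
  bf B (\col_i x ((s^-1)%g i) 0) (\col_i x ((s^-1)%g i) 0) =
  \sum_a \sum_b x a 0 * B (s a) (s b) * x b 0.
Proof.
rewrite bfE (reindex_inj (@perm_inj _ s)) /=; apply: eq_bigr => a _.
rewrite (reindex_inj (@perm_inj _ s)) /=; apply: eq_bigr => b _.
by rewrite !mxE !permK.
Qed.

Lemma symB_psd (B : 'M[R]_n) : psd B -> psd (symB B).
Proof.
move=> [sB pB]; split.
  apply/matrixP => a b; rewrite !mxE; congr (_ * _); apply: eq_bigr => s _.
  by have := congr1 (fun A : 'M[R]_n => A (s a) (s b)) sB; rewrite mxE.
move=> x; rewrite -/(bf _ _ _) bfE.
set c := (#|Aut|%:R : R)^-1.
have c0 : 0 <= c by rewrite invr_ge0 ler0n.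
rewrite (eq_bigr (fun a => \sum_b \sum_(s in Aut) c * (x a 0 * B (s a) (s b) * x b 0))); last first.
  move=> a _; apply: eq_bigr => b _.
  rewrite mxE mulr_sumr mulr_sumr mulr_suml; apply: eq_bigr => s _; rewrite /c; ring.
under eq_bigr do rewrite exchange_big.
rewrite exchange_big; apply: sumr_ge0 => s _.
have := pB (\col_i x ((s^-1)%g i) 0); rewrite -/(bf _ _ _) bf_perm => h.
rewrite (eq_bigr (fun a => c * \sum_b x a 0 * B (s a) (s b) * x b 0)); last first.
  by move=> a _; rewrite mulr_sumr.
by rewrite -mulr_sumr mulr_ge0.
Qed.

Lemma symB_sum (B : 'M[R]_n) : \sum_a \sum_b symB B a b = \sum_a \sum_b B a b.
Proof.
set c := (#|Aut|%:R : R)^-1.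
rewrite (eq_bigr (fun a => \sum_b \sum_(s in Aut) c * B (s a) (s b))); last first.
  by move=> a _; apply: eq_bigr => b _; rewrite mxE mulr_sumr.
under eq_bigr do rewrite exchange_big.
rewrite exchange_big.
rewrite (eq_bigr (fun s => c * \sum_a \sum_b B a b)); last first.
  move=> s _; rewrite mulr_sumr [in RHS](reindex_inj (@perm_inj _ s)) /=.
  apply: eq_bigr => a _; rewrite mulr_sumr [in RHS](reindex_inj (@perm_inj _ s)) /=.
  by apply: eq_bigr.
rewrite sumr_const -mulr_natr /c mulrAC mulVf ?mul1r //.
by rewrite pnatr_eq0 -lt0n card_Aut_gt0.
Qed.

Lemma symB_edge (B : 'M[R]_n) : (forall a b, e a b -> B a b = 0) ->
  forall a b, e a b -> symB B a b = 0.
Proof.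
move=> hB a b eab; rewrite mxE big1 ?mulr0 // => s /AutP hs.
by apply: hB; rewrite hs.
Qed.

Lemma symB_diag (B : 'M[R]_n) : (0 < n)%N -> vertex_transitive e -> \tr B = 1 ->
  forall a, symB B a a = n%:R^-1.
Proof.
move=> n0 vt trB a.
pose d a := \sum_(s in Aut) B (s a) (s a).
have dc : forall a', d a' = d a.
  move=> a'; have [t [ht ta]] := vt a' a.
  have tA : t \in Aut by apply/AutP.
  rewrite /d (reindex_inj (mulgI t)) /=.
  rewrite (eq_bigl (fun s => s \in Aut)); last first.
    move=> s; apply/idP/idP => [h | h]; last exact: AutM.
    by rewrite -(mulKg t s); apply: AutM => //; apply: AutV.
  by apply: eq_bigr => s _; rewrite permM ta.
have sd : \sum_a' d a' = #|Aut|%:R.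
  rewrite /d exchange_big /= (eq_bigr (fun s => 1)).
    by rewrite sumr_const.
  by move=> s _; rewrite -trB /mxtrace [in RHS](reindex_inj (@perm_inj _ s)).
have : \sum_a' d a' = n%:R * d a.
  by rewrite (eq_bigr (fun _ => d a)) // sumr_const card_ord mulr_natl.
rewrite sd => h.
have nz : (n%:R : R) != 0 by rewrite pnatr_eq0 -lt0n.
have az : (#|Aut|%:R : R) != 0 by rewrite pnatr_eq0 -lt0n card_Aut_gt0.
rewrite mxE -/(d a) (_ : d a = #|Aut|%:R / n%:R); last first.
  by rewrite h; field.
by field; apply/andP.
Qed.

Lemma bf1 (x : 'cV[R]_n) : bf 1%:M x x = \sum_a x a 0 ^+ 2.
Proof. by rewrite /bf mulmx1 mxE; apply: eq_bigr => a _; rewrite mxE expr2. Qed.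

Lemma feasible_id : simple_graph e -> feasibleM e (1%:M : 'M[R]_n).
Proof.
move=> [_ irr]; split; last split.
- split; first exact: trmx1.
  by move=> x; rewrite -/(bf _ _ _) bf1 sumr_ge0 // => a _; rewrite sqr_ge0.
- by move=> a; rewrite mxE eqxx.
- move=> a b eab; rewrite mxE; case: eqP => // ab; subst b.
  by rewrite irr in eab.
Qed.

Lemma bfZm (k : R) (A : 'M[R]_n) x y : bf (k *: A) x y = k * bf A x y.
Proof.
rewrite !bfE mulr_sumr; apply: eq_bigr => a _; rewrite mulr_sumr.
by apply: eq_bigr => b _; rewrite mxE; ring.
Qed.

Lemma feasible_sym (B : 'M[R]_n) : (0 < n)%N -> vertex_transitive e ->
  psd B -> \tr B = 1 -> (forall a b, e a b -> B a b = 0) ->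
  feasibleM e (n%:R *: symB B).
Proof.
move=> n0 vt pB trB eB; have [sS pS] := symB_psd pB.
have nz : (n%:R : R) != 0 by rewrite pnatr_eq0 -lt0n.
split; last split.
- split.
    by rewrite linearZ /= sS.
  move=> x; rewrite -/(bf _ _ _) bfZm mulr_ge0 ?ler0n //; exact: pS.
- by move=> a; rewrite mxE symB_diag // mulfV.
- by move=> a b eab; rewrite mxE symB_edge ?mulr0.
Qed.

Definition Ju := J_uniform R n.

Lemma Ju_prod a b : (0 < n)%N -> Ju a 0 * Ju b 0 = n%:R^-1.
Proof.
move=> n0; rewrite !mxE -expr2 exprVn sqr_sqrtr // ler0n //.
Qed.

Lemma unit_Ju : (0 < n)%N -> unit_vec Ju.
Proof.
move=> n0; rewrite /unit_vec (eq_bigr (fun _ => n%:R^-1)).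
  by rewrite sumr_const card_ord -mulr_natr; field; rewrite pnatr_eq0 -lt0n.
by move=> a _; rewrite expr2 Ju_prod.
Qed.

Lemma obj_u (M : 'M[R]_n) : (0 < n)%N -> bf M Ju Ju = n%:R^-1 * \sum_a \sum_b M a b.
Proof.
move=> n0; rewrite bfE mulr_sumr; apply: eq_bigr => a _; rewrite mulr_sumr.
by apply: eq_bigr => b _; rewrite -(Ju_prod a b n0); ring.
Qed.

Section Max.
Variable M0 : 'M[R]_n.
Hypothesis n0 : (0 < n)%N.
Hypothesis sg : simple_graph e.
Hypothesis vt : vertex_transitive e.
Hypothesis fM0 : feasibleM e M0.
Hypothesis maxM0 : forall M, feasibleM e M -> bf M Ju Ju <= bf M0 Ju Ju.

Let W := bf M0 Ju Ju.

Lemma theta_ub t : theta_values e t -> t <= W.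
Proof.
move=> [B [pB [trB [eB ->]]]].
have := maxM0 (feasible_sym n0 vt pB trB eB).
rewrite obj_u // -/W.
suff -> : \sum_a \sum_b (n%:R *: symB B) a b = n%:R * \sum_a \sum_b B a b.
  by rewrite mulrA mulVf ?mul1r // pnatr_eq0 -lt0n.
rewrite -symB_sum mulr_sumr; apply: eq_bigr => a _; rewrite mulr_sumr.
by apply: eq_bigr => b _; rewrite mxE.
Qed.

Lemma theta_W : theta_values e W.
Proof. exact: theta_of (unit_Ju n0) fM0. Qed.

Lemma W_ge1 : 1 <= W.
Proof.
have := maxM0 (feasible_id sg); rewrite bf1 -/W.
by have := unit_Ju n0; rewrite /unit_vec => ->.
Qed.

Lemma H2_ub J w : unit_vec J -> H2_values e J w -> w <= W.
Proof.
move=> uJ [M [fM ->]]; rewrite objE; apply: theta_ub; exact: theta_of.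
Qed.

Lemma H_lb J w : unit_vec J -> H_values e J w -> - Num.sqrt W <= w.
Proof.
move=> uJ [v [M [fM [pN ->]]]].
set s := \sum_a J a 0 * v a 0.
have h1 : s ^+ 2 <= W.
  apply: le_trans (lb_H J pN) _; apply: theta_ub; exact: theta_of.
rewrite lerNl; apply: (@le_trans _ _ `|s|); first by rewrite -normrN ler_norm.
by rewrite -sqrtr_sqr ler_sqrt // (le_trans _ h1) // sqr_ge0.
Qed.

Lemma H_attain : H_values e Ju (- Num.sqrt W).
Proof.
have [[_ pM0] _] := fM0.
have qpos : 0 < bf M0 Ju Ju by apply: lt_le_trans W_ge1.
have [pN hs] := attain_H (proj1 fM0) qpos.
by exists ((- (Num.sqrt (bf M0 Ju Ju))^-1) *: (M0 *m Ju)), M0; split; last split.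
Qed.

End Max.

End Graph.

From mathcomp Require Import classical_sets boolp topology normedtype derive.
Import numFieldNormedType.Exports.
Local Open Scope classical_set_scope.

Section Exist.
Variable R : realType.
Variable n : nat.
Variable e : rel 'I_n.
Local Notation V := 'rV[R]_(n * n).

Lemma cont_sum (I : Type) (r : seq I) (F : I -> V -> R) :
  (forall i, continuous (F i)) -> continuous (fun x => \sum_(i <- r) F i x).
Proof.
move=> cF; elim: r => [|i r IH].
  have -> : (fun x => \sum_(j <- [::]) F j x) = (fun=> 0) by apply/funext => x; rewrite big_nil.
  exact: cst_continuous.
have -> : (fun x => \sum_(j <- i :: r) F j x) = (fun x => F i x + \sum_(j <- r) F j x).
  by apply/funext => x; rewrite big_cons.
by move=> x; apply: continuousD; [exact: cF | exact: IH].
Qed.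

Lemma cont_ent a b : continuous (fun v : V => vec_mx v a b).
Proof.
have -> : (fun v : V => vec_mx v a b) = (fun v : V => v 0 (mxvec_index a b)).
  by apply/funext => v; rewrite mxE.
exact: coord_continuous.
Qed.

Lemma cont_lin (c : 'I_n -> 'I_n -> R) :
  continuous (fun v : V => \sum_a \sum_b c a b * vec_mx v a b).
Proof.
apply: cont_sum => a; apply: cont_sum => b x.
by apply: continuousM; [exact: cst_continuous | exact: cont_ent].
Qed.

Lemma closed_forall (I : Type) (P : I -> set V) :
  (forall i, closed (P i)) -> closed [set v | forall i, P i v].
Proof.
move=> cP.
have -> : [set v | forall i, P i v] = \bigcap_(i in setT) P i.
  by apply/seteqP; split => v /= h i; [move=> _; exact: h | exact: h].
by apply: closed_bigI => i _; exact: cP.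
Qed.

Lemma closed_lin_eq (c : 'I_n -> 'I_n -> R) (y : R) :
  closed [set v : V | \sum_a \sum_b c a b * vec_mx v a b = y].
Proof.
apply: (@preimage_closed _ _ (fun v : V => \sum_a \sum_b c a b * vec_mx v a b) [set x | x = y]).
  by move=> x _; exact: cont_lin.
exact: closed_eq.
Qed.

Lemma closed_lin_ge (c : 'I_n -> 'I_n -> R) :
  closed [set v : V | 0 <= \sum_a \sum_b c a b * vec_mx v a b].
Proof.
apply: (@preimage_closed _ _ (fun v : V => \sum_a \sum_b c a b * vec_mx v a b) [set x | 0 <= x]).
  by move=> x _; exact: cont_lin.
exact: closed_ge.
Qed.

Lemma lin_ent a b (v : V) :
  vec_mx v a b = \sum_i \sum_j ((i == a) && (j == b))%:R * vec_mx v i j.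
Proof.
rewrite (bigD1 a) //=.
rewrite (_ : \sum_(i < n | i != a) _ = 0) ?addr0; last first.
  by rewrite big1 // => k ka; rewrite big1 // => l _; rewrite (negbTE ka) mul0r.
rewrite (bigD1 b) //=.
rewrite (_ : \sum_(j < n | j != b) _ = 0) ?addr0; last first.
  by rewrite big1 // => l lb; rewrite (negbTE lb) andbF mul0r.
by rewrite !eqxx mul1r.
Qed.

Lemma closed_cont_eq (f : V -> R) y : continuous f -> closed [set v | f v = y].
Proof.
move=> cf; apply: (@preimage_closed _ _ f [set x | x = y]).
  by move=> x _; exact: cf.
exact: closed_eq.
Qed.

Lemma closed_cont_ge (f : V -> R) : continuous f -> closed [set v | 0 <= f v].
Proof.
move=> cf; apply: (@preimage_closed _ _ f [set x | 0 <= x]).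
  by move=> x _; exact: cf.
exact: closed_ge.
Qed.

Lemma closed_imp (b : bool) (P : set V) : closed P -> closed [set v | b -> P v].
Proof.
case: b => cP.
  have -> : [set v | true -> P v] = P.
    by apply/seteqP; split => v /=; [apply | move=> ? ?].
  exact: cP.
have -> : [set v | false -> P v] = setT by apply/seteqP; split => v.
exact: closedT.
Qed.

Lemma closed_feas : closed [set v : V | feasibleM e (vec_mx v)].
Proof.
have -> : [set v : V | feasibleM e (vec_mx v)] =
  [set v | forall ab : 'I_n * 'I_n, vec_mx v ab.1 ab.2 - vec_mx v ab.2 ab.1 = 0]
  `&` [set v | forall x : 'cV[R]_n, 0 <= bf (vec_mx v) x x]
  `&` [set v | forall a, vec_mx v a a = 1]
  `&` [set v | forall ab : 'I_n * 'I_n, e ab.1 ab.2 -> vec_mx v ab.1 ab.2 = 0].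
  apply/seteqP; split => v /=.
  - move=> [[sM pM] [dM eM]]; split; [split; [split|] |].
    + move=> [a b] /=; have := congr1 (fun A : 'M[R]_n => A b a) sM.
      by rewrite mxE => ->; rewrite subrr.
    + exact: pM.
    + exact: dM.
    + by move=> [a b] /=; exact: eM.
  - move=> [[[hs hp] hd] he]; split; [split|split].
    + apply/matrixP => a b; rewrite mxE; apply/eqP; rewrite -subr_eq0; apply/eqP.
      exact: (hs (b, a)).
    + exact: hp.
    + exact: hd.
    + by move=> a b; exact: (he (a, b)).
apply: closedI; [apply: closedI; [apply: closedI|] |].
- apply: closed_forall => -[a b] /=; apply: closed_cont_eq => x.
  by apply: continuousB; exact: cont_ent.
- apply: closed_forall => x; apply: closed_cont_ge.
  have -> : (fun v : V => bf (vec_mx v) x x) =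
            (fun v : V => \sum_i \sum_j (x i 0 * x j 0) * vec_mx v i j).
    apply/funext => v; rewrite bfE; apply: eq_bigr => i _; apply: eq_bigr => j _.
    ring.
  exact: cont_lin.
- by apply: closed_forall => a; apply: closed_cont_eq; exact: cont_ent.
- apply: closed_forall => -[a b] /=; apply: closed_imp.
  by apply: closed_cont_eq; exact: cont_ent.
Qed.

Lemma bf_delta (M : 'M[R]_n) i j :
  bf M (delta_mx i (0 : 'I_1)) (delta_mx j (0 : 'I_1)) = M i j.
Proof.
rewrite bfE (bigD1 i) //=.
rewrite (_ : \sum_(k < n | k != i) _ = 0) ?addr0; last first.
  by rewrite big1 // => k ki; rewrite big1 // => l _; rewrite !mxE (negbTE ki) /= !mul0r.
rewrite (bigD1 j) //=.
rewrite (_ : \sum_(l < n | l != j) _ = 0) ?addr0; last first.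
  by rewrite big1 // => l lj; rewrite !mxE (negbTE lj) /= mulr0.
by rewrite !mxE !eqxx /= mul1r mulr1.
Qed.

Lemma entry_bound (M : 'M[R]_n) : feasibleM e M -> forall a b, `|M a b| <= 1.
Proof.
move=> [[sM pM] [dM _]] a b.
have pb : forall x, 0 <= bf M x x by exact: pM.
have sab : M b a = M a b.
  by have := congr1 (fun A : 'M[R]_n => A a b) sM; rewrite mxE.
pose u : 'cV[R]_n := delta_mx a (0 : 'I_1); pose w : 'cV[R]_n := delta_mx b (0 : 'I_1).
have h1 := pb (u + w); have h2 := pb (u + (-1) *: w).
rewrite !bfDl !bfDr !bfZl !bfZr !bf_delta dM dM sab in h1 h2.
rewrite ler_norml; apply/andP; split; lra.
Qed.

Lemma norm_bound (v : V) : feasibleM e (vec_mx v) -> `|v| <= 1.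
Proof.
move=> fv; change (mx_norm v <= 1); rewrite mx_normrE.
apply: bigmax_le => // -[i k] _ /=.
rewrite (ord1 i); case: (mxvec_indexP k) => a b.
by have := entry_bound fv a b; rewrite mxE.
Qed.

Lemma exists_max (J : 'cV[R]_n) : simple_graph e ->
  exists M0, feasibleM e M0 /\ forall M, feasibleM e M -> bf M J J <= bf M0 J J.
Proof.
move=> sg.
pose A := [set v : V | feasibleM e (vec_mx v)].
have A0 : A !=set0 by exists (mxvec 1%:M); rewrite /A /= mxvecK; exact: feasible_id.
have cA : compact A.
  apply: bounded_closed_compact; last exact: closed_feas.
  apply: filterS (nbhs_pinfty_ge (num_real 1)) => M M1 v Av.
  exact: le_trans (norm_bound Av) M1.
have cf : continuous (fun v : V => bf (vec_mx v) J J).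
  have -> : (fun v : V => bf (vec_mx v) J J) =
            (fun v : V => \sum_i \sum_j (J i 0 * J j 0) * vec_mx v i j).
    apply/funext => v; rewrite bfE; apply: eq_bigr => i _; apply: eq_bigr => j _.
    ring.
  exact: cont_lin.
have [c cA' cmax] := compact_EVT_max A0 cA (@continuous_subspaceT _ _ A _ cf).
exists (vec_mx c); split; first by move: cA'; rewrite inE.
move=> M fM; have := cmax (mxvec M); rewrite mxvecK; apply.
by rewrite inE /A /= mxvecK.
Qed.

End Exist.

Theorem mainTheorem1 (R : realType) (n : nat) (e : rel 'I_n) :
  (0 < n)%N -> simple_graph e -> vertex_transitive e ->
  exists W : R,
    [/\ H2_worst e W, H2_opt e (J_uniform R n) W, is_theta e W,
        H_worst e (- Num.sqrt W) & H_opt e (J_uniform R n) (- Num.sqrt W)].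
Proof.
move=> n0 sg vt.
have [M0 [fM0 maxM0]] := exists_max (Ju R n) sg.
have uJ := unit_Ju R n0.
have h2opt : H2_opt e (J_uniform R n) (bf M0 (Ju R n) (Ju R n)).
  split; first by exists M0; split => //; rewrite objE.
  by move=> x hx; exact: (H2_ub n0 vt maxM0 uJ hx).
have hopt : H_opt e (J_uniform R n) (- Num.sqrt (bf M0 (Ju R n) (Ju R n))).
  split; first exact: (H_attain n0 sg fM0 maxM0).
  by move=> x hx; exact: (H_lb n0 vt maxM0 uJ hx).
exists (bf M0 (Ju R n) (Ju R n)); split => //.
- split; first by exists (Ju R n).
  by move=> x [J [uJ' [hx _]]]; exact: (H2_ub n0 vt maxM0 uJ' hx).
- split; first exact: (theta_W n0 fM0).
  by move=> t ht; exact: (theta_ub n0 vt maxM0 ht).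
- split; first by exists (Ju R n).
  by move=> x [J [uJ' [hx _]]]; exact: (H_lb n0 vt maxM0 uJ' hx).
Qed.
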